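(* Let $N\ge1$, $\Delta w>0$, $\Delta t>0$. For $i=0,\dots,N-1$ let $D_{i+1/2}>0$ and let $\tilde{\mathcal C}^n_{i+1/2}\in\mathbb{R}$ be arbitrary (in applications they are computed from $f^n$). Define $\lambda^n_{i+1/2}=\Delta w\,\tilde{\mathcal C}^n_{i+1/2}/D_{i+1/2}$, $\delta^n_{i+1/2}=\frac{1}{\lambda^n_{i+1/2}}+\frac{1}{1-e^{\lambda^n_{i+1/2}}}$ (with $\delta^n_{i+1/2}=1/2$ if $\lambda^n_{i+1/2}=0$), $$\mathcal F^n_{i+1/2}=\tilde{\mathcal C}^n_{i+1/2}\big[(1-\delta^n_{i+1/2})f^n_{i+1}+\delta^n_{i+1/2}f^n_i\big]+D_{i+1/2}\frac{f^n_{i+1}-f^n_i}{\Delta w},\quad i=0,\dots,N-1,$$ and $\mathcal F^n_{-1/2}=\mathcal F^n_{N+1/2}=0$. Consider the explicit (forward Euler) scheme $$f_i^{n+1}=f_i^n+\Delta t\,\frac{\mathcal F^n_{i+1/2}-\mathcal F^n_{i-1/2}}{\Delta w},\qquad i=0,\dots,N.$$ Let $M=\max_i|\tilde{\mathcal C}^n_{i+1/2}|$ and $D=\max_i D_{i+1/2}$. If $$\Delta t\le\frac{\Delta w^2}{2(M\Delta w+D)},$$ then $f_i^n\ge0$ for all $i$ implies $f_i^{n+1}\ge 0$ for all $i=0,\dots,N$.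
   Context: This is the Chang–Cooper type (SP-CC) discretization of the 1D Fokker–Planck equation $\partial_t f=\partial_w[(\mathcal B[f]+D')f+D\partial_w f]$ on a uniform grid with no-flux boundary conditions; in the paper $\tilde{\mathcal C}^n_{i+1/2}=\frac{D_{i+1/2}}{\Delta w}\int_{w_i}^{w_{i+1}}\frac{\mathcal B[f^n](w)+D'(w)}{D(w)}dw$ (or a quadrature of it), but the claim holds for arbitrary real values. *)

(* Defs.v *)
From Stdlib Require Import Reals Lra Lia List.
Open Scope R_scope.

(* Grid values f_0..f_N : nat -> R ; interface quantities indexed by i
   stand for i+1/2, i = 0..N-1. *)

Definition cc_delta (l : R) : R :=
  if Req_EM_T l 0 then 1/2 else 1/l + 1/(1 - exp l).

Definition cc_lambda (dw : R) (C Dh : nat -> R) (i : nat) : R :=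
  dw * C i / Dh i.

Definition cc_flux (dw : R) (C Dh f : nat -> R) (i : nat) : R :=
  let d := cc_delta (cc_lambda dw C Dh i) in
  C i * ((1 - d) * f (S i) + d * f i) + Dh i * (f (S i) - f i) / dw.

Definition cc_flux_right (N : nat) (dw : R) (C Dh f : nat -> R) (i : nat) : R :=
  if Nat.ltb i N then cc_flux dw C Dh f i else 0.

Definition cc_flux_left (N : nat) (dw : R) (C Dh f : nat -> R) (i : nat) : R :=
  match i with
  | O => 0
  | S j => cc_flux_right N dw C Dh f j
  end.

Definition cc_step (N : nat) (dw dt : R) (C Dh f : nat -> R) (i : nat) : R :=
  f i + dt * (cc_flux_right N dw C Dh f i - cc_flux_left N dw C Dh f i) / dw.

(* max_{i=0..N-1} g i  (seeded with 0; used only for nonnegative g, N >= 1) *)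
Definition max_upto (N : nat) (g : nat -> R) : R :=
  fold_right Rmax 0 (map g (seq 0 N)).

(* Main.v *)
Require Import Defs.
From Stdlib Require Import Reals Lra Lia List.
Open Scope R_scope.

Lemma sign_lem (L : R) : L <> 0 -> 0 < L * (exp L - 1).
Proof.
  intro H. destruct (Rlt_or_le 0 L) as [Hp|Hn].
  - assert (exp 0 < exp L) by (apply exp_increasing; lra). rewrite exp_0 in H0. nra.
  - assert (L < 0) by lra. assert (exp L < exp 0) by (apply exp_increasing; lra).
    rewrite exp_0 in H1. nra.
Qed.

Lemma delta_props (L : R) :
  0 <= cc_delta L <= 1 /\ L * cc_delta L <= 1 /\ -1 <= L * (1 - cc_delta L).
Proof.
  unfold cc_delta. destruct (Req_EM_T L 0) as [H0|H0].
  - subst. lra.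
  - pose proof (sign_lem L H0) as Hs.
    set (E := exp L) in *.
    assert (Hu : E - 1 <> 0) by (intro Hc; rewrite Hc in Hs; lra).
    assert (Hd : 1 / L + 1 / (1 - E) = (E - 1 - L) * / (L * (E - 1))) by (field; lra).
    rewrite Hd.
    assert (Hq : 0 < / (L * (E - 1))) by (apply Rinv_0_lt_compat; lra).
    set (q := / (L * (E - 1))) in *.
    assert (Hqe : q * (L * (E - 1)) = 1) by (unfold q; field; lra).
    assert (H1 : 1 + L <= E) by apply exp_ineq1_le.
    assert (H2 : 1 + - L <= exp (- L)) by apply exp_ineq1_le.
    assert (H3 : exp (-L) * E = 1) by (unfold E; rewrite <- exp_plus; replace (-L + L) with 0 by ring; apply exp_0).
    assert (HE : 0 < E) by apply exp_pos.
    assert (H4 : E * (1 - L) <= 1) by nra.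
    repeat split.
    + apply Rmult_le_pos; lra.
    +
      assert ((E - 1 - L) <= L * (E - 1)) by nra. nra.
    + nra.
    + assert (HL : L = L * L * q * (E - 1)) by nra.
      assert (0 <= L * L * q * E) by (apply Rmult_le_pos; [apply Rmult_le_pos; [nra|lra]|lra]).
      nra.
Qed.

Lemma fold_max_ge0 (l : list R) : 0 <= fold_right Rmax 0 l.
Proof. induction l; simpl. lra. eapply Rle_trans; [exact IHl| apply Rmax_r]. Qed.

Lemma fold_max_in (l : list R) x : In x l -> x <= fold_right Rmax 0 l.
Proof.
  induction l; simpl; [tauto|]. intros [->|H].
  - apply Rmax_l.
  - eapply Rle_trans; [apply IHl; exact H| apply Rmax_r].
Qed.

Lemma max_upto_ge (N : nat) g i : (i < N)%nat -> g i <= max_upto N g.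
Proof.
  intro H. unfold max_upto. apply fold_max_in. apply in_map. apply in_seq. lia.
Qed.

Lemma max_upto_nonneg N g : 0 <= max_upto N g.
Proof. apply fold_max_ge0. Qed.

Lemma node_pos (fi r Ar Br fr Al Bl fl K: R) : 0 <= fi -> 0 <= fr -> 0 <= fl -> 0 <= r ->
  2*r*K <= 1 -> 0 <= Ar -> -K <= Br <= 0 -> 0 <= Al <= K -> -K <= Bl <= 0 ->
  0 <= fi + r*((Ar*fr + Br*fi) - (Al*fi + Bl*fl)).
Proof.
  intros. replace (fi + r*((Ar*fr + Br*fi) - (Al*fi + Bl*fl)))
    with (fi*(1 + r*(Br - Al)) + r*Ar*fr + r*(-Bl)*fl) by ring.
  assert (0 <= 1 + r*(Br - Al)) by nra.
  assert (0 <= fi*(1 + r*(Br - Al))) by (apply Rmult_le_pos; lra).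
  assert (0 <= r*Ar*fr) by (repeat apply Rmult_le_pos; lra).
  assert (0 <= r*(-Bl)*fl) by (repeat apply Rmult_le_pos; lra).
  lra.
Qed.

Theorem mainTheorem3 (N : nat) (dw dt : R) (C Dh f : nat -> R) :
  (1 <= N)%nat ->
  0 < dw -> 0 < dt ->
  (forall i, (i < N)%nat -> 0 < Dh i) ->
  dt <= dw ^ 2 / (2 * (max_upto N (fun i => Rabs (C i)) * dw + max_upto N Dh)) ->
  (forall i, (i <= N)%nat -> 0 <= f i) ->
  forall i, (i <= N)%nat -> 0 <= cc_step N dw dt C Dh f i.
Proof.
  intros HN Hdw Hdt HD Hcfl Hf i Hi.
  set (M := max_upto N (fun i => Rabs (C i))) in *.
  set (Dm := max_upto N Dh) in *.
  assert (HM : 0 <= M) by apply max_upto_nonneg.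
  assert (HDm : 0 < Dm) by (apply Rlt_le_trans with (Dh 0%nat); [apply HD; lia| apply (max_upto_ge N Dh 0); lia]).
  set (K := M + Dm / dw).
  set (r := dt / dw).
  assert (Hr : 0 <= r) by (unfold r; apply Rmult_le_pos; [lra| apply Rlt_le, Rinv_0_lt_compat; lra]).
  assert (HK : 2 * r * K <= 1).
  { unfold r, K.
    assert (Hden : 0 < 2 * (M * dw + Dm)) by nra.
    apply Rmult_le_compat_r with (r := 2 * (M * dw + Dm)) in Hcfl; [|lra].
    replace (dw ^ 2 / (2 * (M * dw + Dm)) * (2 * (M * dw + Dm))) with (dw^2) in Hcfl by (field; lra).
    replace (2 * (dt / dw) * (M + Dm / dw)) with (dt * (2 * (M * dw + Dm)) / dw^2) by (field; lra).
    apply Rmult_le_reg_r with (dw^2); [nra|].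
    replace (dt * (2 * (M * dw + Dm)) / dw ^ 2 * dw ^ 2) with (dt * (2 * (M * dw + Dm))) by (field; lra).
    lra. }
  assert (HK0 : 0 <= K) by (unfold K; assert (0 <= Dm/dw) by (apply Rmult_le_pos; [lra| apply Rlt_le, Rinv_0_lt_compat; lra]); lra).
  set (A := fun j => C j * (1 - cc_delta (cc_lambda dw C Dh j)) + Dh j / dw).
  set (B := fun j => C j * cc_delta (cc_lambda dw C Dh j) - Dh j / dw).
  assert (Hflux : forall j, cc_flux dw C Dh f j = A j * f (S j) + B j * f j).
  { intro j. unfold cc_flux, A, B. field. lra. }
  assert (HAB : forall j, (j < N)%nat -> 0 <= A j <= K /\ -K <= B j <= 0).
  { intros j Hj. pose proof (HD j Hj) as Hdj.
    assert (HCj : Rabs (C j) <= M) by (apply (max_upto_ge N (fun i => Rabs (C i)) j); lia).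
    assert (HDj : Dh j <= Dm) by (apply max_upto_ge; lia).
    assert (HDjw : Dh j / dw <= Dm / dw) by (apply Rmult_le_compat_r; [apply Rlt_le, Rinv_0_lt_compat|]; lra).
    destruct (delta_props (cc_lambda dw C Dh j)) as [[Hd0 Hd1] [Hl1 Hl2]].
    set (d := cc_delta (cc_lambda dw C Dh j)) in *.
    assert (HC : C j = cc_lambda dw C Dh j * (Dh j / dw)) by (unfold cc_lambda; field; lra).
    set (L := cc_lambda dw C Dh j) in *.
    assert (Hq : 0 < Dh j / dw) by (apply Rmult_lt_0_compat; [lra| apply Rinv_0_lt_compat; lra]).
    set (q := Dh j / dw) in *.
    unfold A, B. fold L. fold d. fold q.
    pose proof (Rle_abs (C j)). pose proof (Rle_abs (- C j)). rewrite Rabs_Ropp in H0.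
    assert (E1 : C j * (1 - d) = q * (L * (1 - d))) by (rewrite HC; ring).
    assert (E2 : C j * d = q * (L * d)) by (rewrite HC; ring).
    assert (0 <= q * (L * (1 - d) + 1)) by (apply Rmult_le_pos; lra).
    assert (0 <= q * (1 - L * d)) by (apply Rmult_le_pos; lra).
    assert (q * (L * (1 - d) + 1) = q * (L * (1 - d)) + q) by ring.
    assert (q * (1 - L * d) = q - q * (L * d)) by ring.
    assert (C j * (1 - d) <= Rabs (C j) /\ - Rabs (C j) <= C j * d) as [? ?].
    { destruct (Rle_or_lt 0 (C j)).
      - rewrite Rabs_right by lra. assert (0 <= C j * d) by (apply Rmult_le_pos; lra).
        assert (C j * d <= C j * 1) by (apply Rmult_le_compat_l; lra). lra.
      - rewrite Rabs_left by lra.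
        assert (C j * (1 - d) <= 0) by (rewrite <- (Rmult_0_r (C j)); apply Rmult_le_compat_neg_l; lra).
        assert (C j * 1 <= C j * d) by (apply Rmult_le_compat_neg_l; lra). lra. }
    unfold K. split; split; lra. }
  unfold cc_step, cc_flux_right, cc_flux_left.
  assert (Hrw : forall X, dt * X / dw = r * X) by (intro; unfold r; field; lra).
  rewrite Hrw.
  destruct i as [|j].
  - assert (Nat.ltb 0 N = true) as -> by (apply Nat.ltb_lt; lia).
    rewrite Hflux. destruct (HAB 0%nat ltac:(lia)) as [[? ?] [? ?]].
    replace (A 0%nat * f 1%nat + B 0%nat * f 0%nat - 0) with
      ((A 0%nat * f 1%nat + B 0%nat * f 0%nat) - (0 * f 0%nat + 0 * 0)) by ring.
    apply node_pos with K; try lra; apply Hf; lia.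
  - cbv beta iota. try unfold cc_flux_right. assert (Nat.ltb j N = true) as -> by (apply Nat.ltb_lt; lia).
    destruct (HAB j ltac:(lia)) as [[? ?] [? ?]].
    destruct (Nat.ltb (S j) N) eqn:Hlt.
    + apply Nat.ltb_lt in Hlt.
      destruct (HAB (S j) Hlt) as [[? ?] [? ?]].
      rewrite !Hflux. apply node_pos with K; try lra; apply Hf; lia.
    + rewrite Hflux.
      replace (0 - (A j * f (S j) + B j * f j)) with
        ((0 * 0 + 0 * f (S j)) - (A j * f (S j) + B j * f j)) by ring.
      apply node_pos with K; try lra; apply Hf; lia.
Qed.
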